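(* Let $G$ be a graph on $n$ vertices with $m$ edges, let $t\in\mathbb{N}$, and let $F_1,F_2$ be arbitrary graphs, with $r=|V(F_1)|$. Suppose $G$ does not contain the disjoint union $F_1\cup F_2$ as a subgraph. Then for any copy of $F_1$ in $G$, with vertex set $U$, there is a set of $t$ vertices of $U$ whose common neighbourhood in $V(G)\setminus U$ has size at least \[\frac{m'-(n-r)(t-1)}{r-t+1}\Big/\binom{r}{t},\qquad\text{where } m'=m-\mathrm{ex}(n-r,F_2)-\binom{r}{2}.\]
   Context: $\mathrm{ex}(n,F)$ is the maximum number of edges in a graph on $n$ vertices not containing $F$ as a (not necessarily induced) subgraph. $F_1\cup F_2$ denotes the vertex-disjoint union of $F_1$ and $F_2$. *)

(* Defs.v *)
From mathcomp Require Import all_boot all_order all_algebra.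
Set Implicit Arguments. Unset Strict Implicit. Unset Printing Implicit Defensive.

(* A (simple) graph is given by a finite vertex type and an adjacency relation;
   simplicity (symmetry, irreflexivity) is assumed explicitly where needed. *)

Definition contains (VG : finType) (eG : rel VG) (VF : finType) (eF : rel VF) : bool :=
  [exists f : {ffun VF -> VG},
     injectiveb f && [forall x, forall y, eF x y ==> eG (f x) (f y)]].

Definition edges (V : finType) (e : rel V) : {set {set V}} :=
  [set [set p.1; p.2] | p in [set p : V * V | e p.1 p.2]].

Definition nedges (V : finType) (e : rel V) : nat := #|edges e|.

(* simple graph on 'I_n encoded by a set of vertex sets E (only 2-sets count) *)
Definition adjE (n : nat) (E : {set {set 'I_n}}) : rel 'I_n :=
  fun x y => (x != y) && ([set x; y] \in E).

Definition ex (n : nat) (VF : finType) (eF : rel VF) : nat :=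
  \max_(E : {set {set 'I_n}} | ~~ contains (adjE E) eF) nedges (adjE E).

Definition union_rel (V1 V2 : finType) (e1 : rel V1) (e2 : rel V2) : rel (V1 + V2)%type :=
  fun a b => match a, b with
             | inl x, inl y => e1 x y
             | inr x, inr y => e2 x y
             | _, _ => false
             end.

Definition common_nbhd (V : finType) (e : rel V) (S W : {set V}) : {set V} :=
  [set v in W | [forall s in S, e s v]].

(* Main.v *)
Require Import Defs.
From mathcomp Require Import all_boot all_order all_algebra.
From mathcomp Require Import zify ring lra.
Import Order.TTheory GRing.Theory Num.Theory.
Set Implicit Arguments. Unset Strict Implicit.

Lemma nedges_ext (V : finType) (e e' : rel V) : e =2 e' -> nedges e = nedges e'.
Proof.
move=> H; rewrite /nedges /edges.
have -> : [set p : V * V | e p.1 p.2] = [set p | e' p.1 p.2].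
  by apply/setP=> p; rewrite !inE H.
by [].
Qed.

Lemma contains_ext (V : finType) (e e' : rel V) (VF : finType) (eF : rel VF) :
  e =2 e' -> contains e eF = contains e' eF.
Proof.
move=> H; rewrite /contains; apply: eq_existsb => g; congr andb.
apply: eq_forallb => x; apply: eq_forallb => y; by rewrite !H.
Qed.

Lemma enum_bij (V : finType) (W : {set V}) k : #|W| = k ->
  exists h : 'I_k -> V, [/\ injective h, forall i, h i \in W &
     forall w, w \in W -> exists i, h i = w].
Proof.
move=> Hk; subst k.
exists (fun i : 'I_#|W| => enum_val i); split.
- exact: enum_val_inj.
- move=> i; exact: enum_valP.
- move=> w Hw; exists (enum_rank_in Hw w); exact: enum_rankK_in.
Qed.

Lemma card_sep (T : finType) (A : {pred T}) (P : pred T) :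
  #|[set x in A | P x]| = (\sum_(x in A) P x)%N.
Proof.
rewrite -sum1_card (eq_bigl (fun x => (x \in A) && P x)); last by move=> x; rewrite inE.
rewrite big_mkcondr; apply: eq_bigr => x _; by case: (P x).
Qed.

Lemma card_bigcup_le (I T : finType) (P : pred I) (A : I -> {set T}) :
  #|\bigcup_(i | P i) A i| <= \sum_(i | P i) #|A i|.
Proof.
apply: (big_rec2 (fun (X : {set T}) (k : nat) => #|X| <= k)); first by rewrite cards0.
move=> i X k _ HX; apply: leq_trans (leq_card_setU _ _).1 _; by rewrite leq_add2l.
Qed.
Unset Implicit Arguments. Set Strict Implicit.

Theorem mainTheorem5
  (V : finType) (e : rel V) (V1 : finType) (e1 : rel V1) (V2 : finType) (e2 : rel V2)
  (t : nat)
  (e_sym : symmetric e) (e_irr : irreflexive e)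
  (e1_sym : symmetric e1) (e1_irr : irreflexive e1)
  (e2_sym : symmetric e2) (e2_irr : irreflexive e2)
  (ht : t <= #|V1|)
  (hfree : ~~ contains e (union_rel e1 e2))
  (f : {ffun V1 -> V}) (f_inj : injective f)
  (f_hom : forall x y, e1 x y -> e (f x) (f y)) :
  let n := #|V| in let r := #|V1| in let m := nedges e in
  let U := f @: [set: V1] in
  let m' : rat := (m%:Q - (ex (n - r) e2)%:Q - ('C(r, 2))%:Q)%R in
  exists S : {set V}, [/\ S \subset U, #|S| = t &
    ((((m' - (n - r)%N%:Q * (t%:Q - 1)) / (r%:Q - t%:Q + 1)) / ('C(r, t))%:Q)
       <= (#|common_nbhd e S (~: U)|)%:Q)%R].
Proof.
move=> n r m U m'.
set W := ~: U.
have cardU : #|U| = r by rewrite card_imset // cardsT.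
have cardW : #|W| = n - r by rewrite [LHS]cardsCs setCK cardU.
pose N v := [set u in U | e u v].
have [h [h_inj hW hsurj]] := enum_bij cardW.
pose e' := fun i j : 'I_(n - r) => e (h i) (h j).
pose E := edges e'.
have adjEE : adjE E =2 e'.
  move=> x y; rewrite /adjE /E /edges; apply/andP/idP.
  - case=> xy /imsetP [[p1 p2]]; rewrite inE /= => ep Hxy.
    have hx : x \in [set p1; p2] by rewrite -Hxy set21.
    have hy : y \in [set p1; p2] by rewrite -Hxy set22.
    move: hx hy xy; rewrite !inE => /orP[/eqP->|/eqP->] /orP[/eqP->|/eqP->];
      rewrite ?eqxx //= => _; rewrite /e' e_sym.
    by [].
  - move=> exy; split.
      by apply: contraTneq exy => ->; rewrite /e' e_irr.
    by apply/imsetP; exists (x, y); rewrite // inE.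
have ncont : ~~ contains (adjE E) e2.
  rewrite (contains_ext _ adjEE); apply: contra hfree.
  move=> /existsP [g /andP [/injectiveP ginj /forallP hg]].
  apply/existsP; exists [ffun a => match a with inl x => f x | inr y => h (g y) end].
  apply/andP; split.
  - apply/injectiveP => [[a|a] [b|b]]; rewrite !ffunE => H.
    + by rewrite (f_inj _ _ H).
    + by have := hW (g b); rewrite inE -H imset_f.
    + by have := hW (g a); rewrite inE H imset_f.
    + by rewrite (ginj _ _ (h_inj _ _ H)).
  - apply/forallP => [[a|a]]; apply/forallP => [[b|b]]; rewrite !ffunE /=;
      apply/implyP => H //; try by have := H isT.
    + exact: f_hom.
    + by move/forallP: (hg a) => /(_ b) /implyP /(_ H).
have hex : nedges e' <= ex (n - r) e2.
  rewrite -(nedges_ext adjEE); rewrite /ex.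
  exact: (@leq_bigmax_cond _ (fun E => ~~ contains (adjE E) e2) (fun E => nedges (adjE E)) E ncont).
have step1 : m <= 'C(r, 2) + ex (n - r) e2 + \sum_(v in W) #|N v|.
  have Hedges : edges e \subset [set B : {set V} | B \subset U & #|B| == 2]
      :|: ((fun B : {set 'I_(n - r)} => h @: B) @: E) :|: \bigcup_(v in W) ((fun u => [set u; v]) @: N v).
    apply/subsetP => B /imsetP [[x y]]; rewrite inE /= => exy ->.
    have xy : x != y by apply: contraTneq exy => ->; rewrite e_irr.
    case: (boolP (x \in U)) => xU; case: (boolP (y \in U)) => yU.
    - apply/setUP; left; apply/setUP; left; rewrite inE cards2 xy andbT.
      by apply/subsetP => z; rewrite !inE => /orP[/eqP->|/eqP->].
    - apply/setUP; right; apply/bigcupP; exists y; first by rewrite inE.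
      by apply/imsetP; exists x => //; rewrite inE xU exy.
    - apply/setUP; right; apply/bigcupP; exists x; first by rewrite inE.
      apply/imsetP; exists y; first by rewrite inE yU /= e_sym.
      by rewrite setUC.
    - apply/setUP; left; apply/setUP; right.
      have [i hi] : exists i, h i = x by apply: hsurj; rewrite inE.
      have [j hj] : exists j, h j = y by apply: hsurj; rewrite inE.
      apply/imsetP; exists [set i; j].
        by apply/imsetP; exists (i, j); rewrite ?inE /= /e' ?hi ?hj.
      by rewrite imsetU1 imset_set1 hi hj.
  apply: leq_trans (subset_leq_card Hedges) _.
  apply: leq_trans (leq_card_setU _ _).1 _.
  apply: leq_add; last first.
    apply: leq_trans (card_bigcup_le _ _) _.
    by apply: leq_sum => v _; exact: leq_imset_card.
  apply: leq_trans (leq_card_setU _ _).1 _.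
  apply: leq_add; first by rewrite cards_draws cardU.
  by apply: leq_trans (leq_imset_card _ _) hex.
have NU v : N v \subset U by apply/subsetP => u; rewrite inE => /andP[].
have step2 : \sum_(v in W) #|N v| + #|W| <=
    (r + 1 - t) * \sum_(v in W) 'C(#|N v|, t) + t * #|W|.
  have H : \sum_(v in W) (#|N v| + 1) <= \sum_(v in W) ((r + 1 - t) * 'C(#|N v|, t) + t).
    apply: leq_sum => v _.
    have dle : #|N v| <= r by rewrite -cardU; exact: subset_leq_card.
    case: (ltnP #|N v| t) => hd; first by apply: leq_trans _ (leq_addl _ _); rewrite addn1.
    have : 0 < 'C(#|N v|, t) by rewrite bin_gt0.
    move: dle hd ht; rewrite -/r; nia.
  by move: H; rewrite !big_split /= sum1_card sum_nat_const big_distrr /= [#|W| * t]mulnC.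
pose T := [set S : {set V} | S \subset U & #|S| == t].
pose cn S := common_nbhd e S W.
have step3 : \sum_(S in T) #|cn S| = \sum_(v in W) 'C(#|N v|, t).
  have E1 : forall S, S \in T -> #|cn S| = \sum_(v in W) (S \subset N v).
    move=> S; rewrite inE => /andP [SU _]; rewrite /cn /common_nbhd card_sep.
    apply: eq_bigr => v _; congr nat_of_bool.
    apply/forallP/subsetP => [H u uS | H u].
      by rewrite inE (subsetP SU _ uS) /=; move/implyP: (H u); apply.
    by apply/implyP => uS; move: (H u uS); rewrite inE => /andP[].
  rewrite (eq_bigr _ E1) exchange_big /=; apply: eq_bigr => v _.
  rewrite -(cards_draws (N v)) -card_sep; apply: eq_card => S; rewrite !inE.
  case: (boolP (S \subset N v)) => H; rewrite ?andbT ?andbF //.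
  by rewrite (subset_trans H (NU v)).
have posT : 0 < #|T| by rewrite cards_draws cardU bin_gt0.
have [S ST Smax] := eq_bigmax_cond (fun S => #|cn S|) posT.
have step4 : \sum_(v in W) 'C(#|N v|, t) <= 'C(r, t) * #|cn S|.
  rewrite -step3 -cardU -(cards_draws U) -/T -Smax -sum_nat_const.
  by apply: leq_sum => S' HS'; apply: (@leq_bigmax_cond _ (fun S => S \in T) (fun S => #|cn S|)).
move: ST; rewrite inE => /andP [SU /eqP St].
exists S; split => //.
rewrite -!pmulrn /m'.
rewrite cardW in step2.
have hB : (0 < ('C(r, t)%:R : rat))%R by rewrite ltr0n bin_gt0.
have ha : (0 < (r%:R - t%:R + 1 : rat))%R.
  have : ((t%:R : rat) <= r%:R)%R by rewrite ler_nat.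
  lra.
rewrite ler_pdivrMr // ler_pdivrMr //.
have aE : (((r + 1 - t)%:R : rat) = r%:R - t%:R + 1)%R.
  by rewrite natrB ?natrD; [ring | rewrite addn1; exact: leqW].
change (common_nbhd e S W) with (cn S).
move: step1 step2 step4.
move: (\sum_(v in W) #|N v|) => X.
move: (\sum_(v in W) 'C(#|N v|, t)) => Nn.
move: #|cn S| => c.
rewrite -!(ler_nat rat) !natrD !natrM aE => h1 h2 h4.
have h5 : ((r%:R - t%:R + 1) * Nn%:R <= (r%:R - t%:R + 1) * (('C(r, t)%:R : rat) * c%:R))%R.
  by rewrite ler_pM2l.
lra.
Qed.
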